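(* For every integer $l\geq 0$, with $m=2^l$ and $n=4m+1$, the oriented graph $T_l$ is $n$-nice.
   Context: For $l\ge0$, let $m=2^l$, $n=4m+1$. The oriented graph $T_l$ has vertex set $\{x_i : i\in\mathbb{Z}/n\mathbb{Z}\}$ (the vertex $x_i$ being identified with the $m$-tuple $(i,i+1,\dots,i+m-1)$ of elements of $\mathbb{Z}/n\mathbb{Z}$), and arcs $x_ix_{i+m}$ and $x_ix_{i+m+1}$ for every $i$ (indices mod $n$). For a vertex $x$ let $N^+(x)$ (resp. $N^-(x)$) be its set of out-neighbors (resp. in-neighbors), and for a set $S$ let $N^{\pm}(S)=\bigcup_{x\in S}N^{\pm}(x)$. For $\alpha=(\alpha_1,\dots,\alpha_k)\in\{+,-\}^k$ define $N^\alpha(x)=N^{\alpha_1}(x)$ if $k=1$ and $N^{\alpha}(x)=N^{\alpha_1}(N^{(\alpha_2,\dots,\alpha_k)}(x))$ if $k\ge2$. An oriented graph $G$ is $k$-nice if $N^\alpha(x)=V(G)$ for every $\alpha\in\{+,-\}^k$ and every $x\in V(G)$. *)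

(* Defs.v *)
From mathcomp Require Import all_boot.
Set Implicit Arguments. Unset Strict Implicit. Unset Printing Implicit Defensive.

(* An oriented graph on a finite vertex type T, given by its arc relation
   [arc x y] meaning "x -> y". Signs: [true] = "+", [false] = "-". *)
Section Nbhd.
Variable T : finType.
Variable arc : rel T.

Definition Nout (x : T) : {set T} := [set y | arc x y].
Definition Nin (x : T) : {set T} := [set y | arc y x].
Definition N1 (s : bool) (x : T) : {set T} := if s then Nout x else Nin x.

Definition Nset (s : bool) (S : {set T}) : {set T} := \bigcup_(x in S) N1 s x.

Definition Nalpha (alpha : seq bool) (x : T) : {set T} :=
  foldr Nset [set x] alpha.

Definition nice (k : nat) : Prop :=
  forall (alpha : seq bool), size alpha = k ->
  forall x : T, Nalpha alpha x = [set: T].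
End Nbhd.

(* The oriented graph T_l: m = 2^l, n = 4m+1, vertices x_i, i in Z/nZ
   (represented by 'I_n), arcs x_i -> x_{i+m} and x_i -> x_{i+m+1} (mod n). *)
Definition Tm (l : nat) : nat := 2 ^ l.
Definition Tn (l : nat) : nat := 4 * Tm l + 1.

Definition Tarc (l : nat) : rel 'I_(Tn l) :=
  fun x y => (val y == (val x + Tm l) %% Tn l)
          || (val y == (val x + Tm l + 1) %% Tn l).

(* Main.v *)
Require Import Defs.
From mathcomp Require Import all_boot.
From mathcomp Require Import zify.

Lemma Tn_gt0 l : 0 < Tn l.
Proof. by rewrite /Tn addn1. Qed.

Lemma modH a b n : a + n = b -> a %% n = b %% n.
Proof. by move=> <-; rewrite modnDr. Qed.

Definition V l (k : nat) : 'I_(Tn l) := Ordinal (ltn_pmod k (Tn_gt0 l)).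

Lemma key l alpha (x : 'I_(Tn l)) d : d <= size alpha ->
  V l (x + Tm l * count id alpha + 3 * Tm l * count negb alpha + d)
    \in Nalpha (@Tarc l) alpha x.
Proof.
elim: alpha x d => [|s alpha IH] x d hd.
  have -> : d = 0 by move: hd; rewrite /=; lia.
  have -> : V l (x + Tm l * 0 + 3 * Tm l * 0 + 0) = x.
    by apply: val_inj; rewrite /= !muln0 !addn0 modn_small.
  by rewrite /Nalpha /= set11.
change (V l (x + Tm l * count id (s :: alpha) + 3 * Tm l * count negb (s :: alpha) + d)
  \in Nset (@Tarc l) s (Nalpha (@Tarc l) alpha x)).
apply/bigcupP.
exists (V l (x + Tm l * count id alpha + 3 * Tm l * count negb alpha + d.-1)).
  by apply: IH; move: hd => /=; lia.
case: s hd; rewrite /N1 /Nout /Nin inE /Tarc /= -!addnA !modnDml.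
- case: d => [|d] hd.
  + apply/orP; left; apply/eqP; congr (_ %% _); lia.
  + apply/orP; right; apply/eqP; congr (_ %% _); lia.
- case: d => [|d] hd.
  + apply/orP; right; apply/eqP; apply: modH; rewrite /Tn; lia.
  + apply/orP; left; apply/eqP; apply: modH; rewrite /Tn; lia.
Qed.

Theorem lemma11 (l : nat) : nice (@Tarc l) (Tn l).
Proof.
move=> alpha hs x; apply/setP => y; rewrite inE.
set B := x + Tm l * count id alpha + 3 * Tm l * count negb alpha.
have hlt : B %% Tn l < Tn l by apply: ltn_pmod; apply: Tn_gt0.
have hy : (y : nat) < Tn l by apply: ltn_ord.
have -> : y = V l (B + (y + (Tn l - B %% Tn l)) %% Tn l).
  apply: val_inj; rewrite /= modnDmr.
  have -> : B + (y + (Tn l - B %% Tn l)) = (B %/ Tn l + 1) * Tn l + y.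
    move: (divn_eq B (Tn l)) hlt => hB hlt'; lia.
  by rewrite modnMDl modn_small.
apply: key; rewrite hs; apply: ltnW; apply: ltn_pmod; apply: Tn_gt0.
Qed.
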